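(* Let $(X,d)$ be a metric space with $|X|\ge 2$, let $\tilde x=(x_n)$ be a sequence of points of $X$, and let $\tilde x'=(x_{n(k)})$ be an infinite subsequence of $\tilde x$ such that $\limsup_{n\to\infty}\frac{|K_{\tilde x'}(n)|}{n}=0$. Then there exist a sequence $\tilde y$ of points of $X$ and a subsequence $\tilde y'$ of $\tilde y$ such that $\tilde x$ and $\tilde y$ are statistically equivalent, $K_{\tilde y'}=K_{\tilde x'}$, and $\tilde y'$ is not $d$-statistically convergent.
   Context: For a subsequence $\tilde z'=(z_{n(k)})$ of a sequence $(z_n)$ (with $(n(k))$ strictly increasing), $K_{\tilde z'}=\{n(k):k\in\mathbb N\}$ and $K_{\tilde z'}(n)=\{m\in K_{\tilde z'}: m\le n\}$. A set $M\subseteq\mathbb N$ is statistical dense if $\lim_{n\to\infty}|\{m\in M:m\le n\}|/n=1$. Sequences $(x_n),(y_n)$ are statistically equivalent if $x_n=y_n$ for all $n$ in some statistical dense set $M\subseteq\mathbb N$. A sequence $(z_k)$ is $d$-statistically convergent if there is $a\in X$ with $\lim_{n\to\infty}\frac1n|\{k\le n: d(z_k,a)\ge\epsilon\}|=0$ for every $\epsilon>0$; a subsequence $(y_{n(k)})_k$ is regarded as the sequence $k\mapsto y_{n(k)}$. *)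

(* Defs.v *)
From HB Require Import structures.
From mathcomp Require Import all_boot all_order all_algebra.
From mathcomp Require Import all_classical all_reals all_analysis.
Set Implicit Arguments. Unset Strict Implicit. Unset Printing Implicit Defensive.
Import Order.TTheory GRing.Theory Num.Theory.
Import numFieldNormedType.Exports.
Local Open Scope classical_set_scope.
Local Open Scope ring_scope.

(* Sequences are indexed by nat (0-based); the n-th "initial segment" is
   the set of indices m < n, i.e. the first n indices. *)

Definition is_metric (R : realType) (X : Type) (d : X -> X -> R) : Prop :=
  (forall x y, 0 <= d x y) /\
  (forall x y, d x y = 0 <-> x = y) /\
  (forall x y, d x y = d y x) /\
  (forall x y z, d x z <= d x y + d y z).

Definition count_upto (M : set nat) (n : nat) : nat :=
  \sum_(0 <= m < n) ((m \in M) : nat).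

(* a subsequence is given by a strictly increasing index map sub : nat -> nat;
   K_sub = { sub k : k in nat } *)
Definition Kset (sub : nat -> nat) : set nat := range sub.

Definition strictly_increasing (sub : nat -> nat) : Prop :=
  forall k, (sub k < sub k.+1)%N.

Definition Kratio (R : realType) (sub : nat -> nat) (n : nat) : R :=
  (count_upto (Kset sub) n)%:R / n%:R.

Definition stat_dense (R : realType) (M : set nat) : Prop :=
  (fun n : nat => ((count_upto M n)%:R / n%:R : R)) @ \oo --> (1 : R).

Definition stat_equiv (X : Type) (x y : nat -> X) (R : realType) : Prop :=
  exists M : set nat, stat_dense R M /\ (forall n, M n -> x n = y n).

Definition d_stat_convergent (R : realType) (X : Type) (d : X -> X -> R)
  (z : nat -> X) : Prop :=
  exists a : X, forall eps : R, 0 < eps ->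
    (fun n : nat =>
       ((count_upto [set k | eps <= d (z k) a] n)%:R / n%:R : R)) @ \oo --> (0 : R).

(* Main.v *)
Require Import Defs.
From HB Require Import structures.
From mathcomp Require Import all_boot all_order all_algebra.
From mathcomp Require Import all_classical all_reals all_analysis.
From mathcomp Require Import lra zify.
Import Order.TTheory GRing.Theory Num.Theory.
Import numFieldNormedType.Exports.
Local Open Scope classical_set_scope.
Local Open Scope ring_scope.

Lemma count_uptoC (A : set nat) n : (count_upto A n + count_upto (~` A) n = n)%N.
Proof.
rewrite /count_upto -big_split /=.
rewrite (eq_bigr (fun _ => 1%N)); last by move=> m _; rewrite in_setC; case: (m \in A).
by rewrite sum_nat_const_nat muln1 subn0.
Qed.

Lemma count_upto_le1 (A : set nat) n : (count_upto A n <= n)%N.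
Proof. by rewrite -{2}(count_uptoC A n) leq_addr. Qed.

Lemma count_upto_mono (A B : set nat) n : A `<=` B -> (count_upto A n <= count_upto B n)%N.
Proof.
move=> AB; rewrite /count_upto; apply: leq_sum => m _.
case: (boolP (m \in A)) => //= /set_mem/AB/mem_set ->; done.
Qed.

Lemma sum_odd n : (\sum_(0 <= m < n) (odd m : nat) = n./2)%N.
Proof.
elim: n => [|n IH]; first by rewrite big_geq.
by rewrite big_nat_recr //= IH uphalf_half addnC.
Qed.

Lemma sum_even n : (\sum_(0 <= m < n) (~~ odd m : nat) = uphalf n)%N.
Proof.
elim: n => [|n IH]; first by rewrite big_geq.
rewrite big_nat_recr //= IH uphalf_half; by case: (odd n); rewrite /= ?addn0 ?addn1.
Qed.

Lemma Kratio_cvg (R : realType) nk : limn_sup (Kratio R nk) = 0 ->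
  Kratio R nk @ \oo --> (0:R).
Proof.
move=> hK.
have ge0 : forall n, 0 <= Kratio R nk n by move=> n; rewrite /Kratio divr_ge0.
have le1 : forall n, Kratio R nk n <= 1.
  move=> [|n]; first by rewrite /Kratio invr0 mulr0.
  by rewrite /Kratio ler_pdivrMr ?ltr0n // mul1r ler_nat count_upto_le1.
have ub : has_ubound (range (Kratio R nk)) by exists 1 => _ [n _ <-].
have lb : has_lbound (range (Kratio R nk)) by exists 0 => _ [n _ <-].
have cs := cvg_sups_inf ub lb.
have : limn_sup (Kratio R nk) = inf (range (sups (Kratio R nk))).
  by apply: cvg_lim.
rewrite hK => E; rewrite -E in cs.
apply: (squeeze_cvgr _ (cvg_cst (0:R)) cs).
apply: nearW => n; rewrite ge0 /=.
apply: ub_le_sup; first exact: has_ubound_sdrop.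
by exists n => /=.
Qed.
Lemma dense_part (R : realType) nk : limn_sup (Kratio R nk) = 0 ->
  stat_dense R (~` Kset nk).
Proof.
move=> hK; rewrite /stat_dense.
have H : {near \oo, (fun n => 1 - Kratio R nk n) =1
   (fun n : nat => ((count_upto (~` Kset nk) n)%:R / n%:R : R))}.
  exists 1%N => // n /= n1.
  have E : count_upto (~` Kset nk) n = (n - count_upto (Kset nk) n)%N.
    by rewrite -{2}(count_uptoC (Kset nk) n) addKn.
  rewrite /= E natrB ?count_upto_le1 // /Kratio mulrBl divff // pnatr_eq0 -lt0n.
  exact: n1.
apply: cvg_trans (near_eq_cvg H) _.
have := cvgB (cvg_cst (1:R)) (@Kratio_cvg R nk hK); rewrite subr0; exact.
Qed.
Lemma mem_bool (P : pred nat) m : (m \in [set k | P k]) = P m.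
Proof. by apply/idP/idP => [/set_mem|/mem_set]. Qed.

Lemma half_bound (R : realType) n c : (2 <= n)%N -> (n./2 <= c)%N ->
  1/4 <= (c%:R / n%:R : R).
Proof.
move=> n2 hc.
have h4 : (n <= 4 * c)%N.
  apply: (leq_trans _ (leq_mul (leqnn 4) hc)).
  rewrite -{1}(odd_double_half n) -addnn.
  have : (1 <= n./2)%N by rewrite half_gt0.
  case: (odd n) => /=; lia.
have n0 : (0 < n%:R :> R) by rewrite ltr0n; lia.
move: h4; rewrite -(ler_nat R) natrM => h4; rewrite ler_pdivrMr // mulrAC ler_pdivlMr //.  
lra.
Qed.

Lemma alt_not_conv (R : realType) (X : Type) (d : X -> X -> R) (a b : X) :
  is_metric d -> a <> b ->
  ~ d_stat_convergent d (fun k => if odd k then b else a).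
Proof.
move=> [d0 [deq [dsym dtri]]] ab [c Hc].
have dab : 0 < d a b.
  by rewrite lt_neqAle d0 andbT; apply/eqP => /esym /deq.
set eps := d a b / 2.
have e0 : 0 < eps by rewrite /eps divr_gt0.
have key : forall n, (2 <= n)%N ->
  1/4 <= ((count_upto [set k | eps <= d (if odd k then b else a) c] n)%:R / n%:R : R).
  move=> n n2; apply: half_bound => //.
  have [ha|ha] := leP eps (d a c).
  - apply: (leq_trans _ (@count_upto_mono [set k | ~~ odd k] _ n _)).
      rewrite /count_upto (eq_bigr (fun m => (~~ odd m : nat))); last first.
        by move=> m _; rewrite mem_bool.
      by rewrite sum_even uphalf_half leq_addl.
    by move=> k /= /negbTE ->.
  - have hb : eps <= d b c.
      have := dtri a c b; rewrite (dsym c b) => h.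
      move: ha; rewrite /eps => ha; lra.
    apply: (leq_trans _ (@count_upto_mono [set k | odd k] _ n _)).
      rewrite /count_upto (eq_bigr (fun m => (odd m : nat))); last first.
        by move=> m _; rewrite mem_bool.
      by rewrite sum_odd.
    by move=> k /= ->.
have q14 : (0:R) < 1/4 by lra.
case: (cvgr_lt _ (Hc eps e0) _ q14) => N _ HN.
have := HN (maxn N 2) (leq_maxl _ _); rewrite ltNge key //.
exact: leq_maxr.
Qed.
Theorem lemma2 (R : realType) (X : Type) (d : X -> X -> R)
  (hd : is_metric d) (hX : exists a b : X, a <> b)
  (x : nat -> X) (nk : nat -> nat) (hnk : strictly_increasing nk)
  (hK : limn_sup (Kratio R nk) = 0) :
  exists (y : nat -> X) (mk : nat -> nat),
    [/\ strictly_increasing mk,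
        stat_equiv x y R,
        Kset mk = Kset nk &
        ~ d_stat_convergent d (fun k => y (mk k))].
Proof.
case: hX => a [b ab].
have inj : injective nk.
  have mono : {homo nk : m n / (m < n)%N} by apply: homo_ltn hnk; exact: ltn_trans.
  move=> m n e; case: (ltngtP m n) => // h; have := mono _ _ h; rewrite e ltnn //.
pose y n := if `[< exists k, nk k = n /\ odd k >] then b
            else if `[< exists k, nk k = n >] then a else x n.
exists y, nk; split => //.
- exists (~` Kset nk); split; first exact: dense_part.
  move=> n /= nK; rewrite /y.
  have -> : `[< exists k, nk k = n /\ odd k >] = false.
    by apply/asboolP => -[k [hk _]]; apply: nK; exists k.
  have -> // : `[< exists k, nk k = n >] = false.
  by apply/asboolP => -[k hk]; apply: nK; exists k.
- have -> : (fun k => y (nk k)) = (fun k => if odd k then b else a).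
    apply/funext => k; rewrite /y.
    case: (boolP (odd k)) => o.
      by have -> // : `[< exists k', nk k' = nk k /\ odd k' >] by apply/asboolP; exists k.
    have -> : `[< exists k', nk k' = nk k /\ odd k' >] = false.
      by apply/asboolP => -[k' [/inj -> ok]]; rewrite ok in o.
    by have -> // : `[< exists k', nk k' = nk k >] by apply/asboolP; exists k.
  exact: alt_not_conv.
Qed.
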